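(* Suppose $U\subseteq\mathbb{H}^d$ is $r$-connected and has subexponential growth. Then $U$ is a quasi-convex quasi-tree. Specifically, there is some $s=s(r)$ such that for every sequence $x=x_0,x_1,\dots,x_m=y$ in $U$ with $d(x_i,x_{i+1})\leq r$ for all $0\leq i<m$, and every point $p$ on the geodesic $[x,y]$, some $x_i$ is within distance $s$ of $p$.
   Context: $U$ is $r$-connected if any two points of $U$ are joined by a sequence in $U$ with consecutive distances $\leq r$. $U$ has subexponential growth if $\lim_{t\to\infty}\frac1t\log\sup_{u\in U}|U\cap B(u,t)|=0$ (for $U$ uniformly discrete), with distances in $\mathbb{H}^d$. *)

(* Defs.v *)
From Stdlib Require Import Reals List.
From Coquelicot Require Import Coquelicot.
Import ListNotations.
Open Scope R_scope.

(* Hyperboloid model of H^d inside R^{d+1}.  A point is a vector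
   x : nat -> R whose coordinates are x 0, x 1, ..., x d; coordinates of
   index > d are required to be 0, so each point has a unique representative. *)
Definition vec := nat -> R.

Definition minkowski (d : nat) (x y : vec) : R :=
  - x 0%nat * y 0%nat + fold_right Rplus 0 (map (fun i => x i * y i) (seq 1 d)).

Definition Hyp (d : nat) (x : vec) : Prop :=
  minkowski d x x = -1 /\ 0 < x 0%nat /\ (forall i, (d < i)%nat -> x i = 0).

Definition arcosh (z : R) : R := ln (z + sqrt (z * z - 1)).

Definition hdist (d : nat) (x y : vec) : R := arcosh (- minkowski d x y).

Definition on_geodesic (d : nat) (x y p : vec) : Prop :=
  exists gamma : R -> vec,
    (forall t, 0 <= t <= hdist d x y -> Hyp d (gamma t)) /\
    (forall s t, 0 <= s <= hdist d x y -> 0 <= t <= hdist d x y ->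
        hdist d (gamma s) (gamma t) = Rabs (s - t)) /\
    gamma 0 = x /\ gamma (hdist d x y) = y /\
    exists t, 0 <= t <= hdist d x y /\ gamma t = p.

Definition r_chain (d : nat) (r : R) (U : vec -> Prop) (x y : vec)
    (m : nat) (f : nat -> vec) : Prop :=
  f 0%nat = x /\ f m = y /\ (forall i, (i <= m)%nat -> U (f i)) /\
  (forall i, (i < m)%nat -> hdist d (f i) (f (S i)) <= r).

Definition r_connected (d : nat) (r : R) (U : vec -> Prop) : Prop :=
  forall x y, U x -> U y -> exists m f, r_chain d r U x y m f.

Definition uniformly_discrete (d : nat) (U : vec -> Prop) : Prop :=
  exists eps, 0 < eps /\
    forall x y, U x -> U y -> x <> y -> eps <= hdist d x y.

(* sup_{u in U} |U ∩ B(u,t)| as an extended real: the sup of the sizes of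
   finite (duplicate-free) lists of points of U ∩ B(u,t), over u in U. *)
Definition ball_count_sup (d : nat) (U : vec -> Prop) (t : R) : Rbar :=
  Lub_Rbar (fun k : R => exists u, U u /\
     exists l : list vec, NoDup l /\
       (forall z, In z l -> U z /\ hdist d u z <= t) /\
       k = INR (length l)).

Definition subexp_growth (d : nat) (U : vec -> Prop) : Prop :=
  (forall t, is_finite (ball_count_sup d U t)) /\
  is_lim (fun t => / t * ln (real (ball_count_sup d U t))) p_infty 0.

(* Main.v *)
Require Import Defs.
From Stdlib Require Import Reals.
From Stdlib Require Import Lra List Classical Lia Arith.
From Coquelicot Require Import Coquelicot.
Open Scope R_scope.

Definition lin (a : R) (u : vec) (b : R) (v : vec) : vec := fun i => a * u i + b * v i.

Lemma fr_lin (l : list nat) a u b v w :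
  fold_right Rplus 0 (map (fun i => lin a u b v i * w i) l) =
  a * fold_right Rplus 0 (map (fun i => u i * w i) l) +
  b * fold_right Rplus 0 (map (fun i => v i * w i) l).
Proof. induction l; simpl; [ring|rewrite IHl; unfold lin; ring]. Qed.

Lemma fr_sym (l : list nat) (u v : vec) :
  fold_right Rplus 0 (map (fun i => u i * v i) l) =
  fold_right Rplus 0 (map (fun i => v i * u i) l).
Proof. induction l; simpl; [ring|rewrite IHl; ring]. Qed.

Lemma fr_pos (l : list nat) (u : vec) :
  0 <= fold_right Rplus 0 (map (fun i => u i * u i) l).
Proof. induction l; simpl; nra. Qed.

Lemma mk_lin d a u b v w :
  minkowski d (lin a u b v) w = a * minkowski d u w + b * minkowski d v w.
Proof. unfold minkowski. rewrite fr_lin. unfold lin. ring. Qed.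

Lemma mk_sym d u v : minkowski d u v = minkowski d v u.
Proof. unfold minkowski. rewrite fr_sym. ring. Qed.

Lemma mk_lin_r d a u b v w :
  minkowski d w (lin a u b v) = a * minkowski d w u + b * minkowski d w v.
Proof. rewrite mk_sym, mk_lin, (mk_sym d u), (mk_sym d v). ring. Qed.

Lemma disc a b c : 0 <= c -> (forall t, 0 <= a + 2*b*t + c*t^2) -> b^2 <= a*c.
Proof.
  intros Hc H. destruct (Req_dec c 0) as [E|E].
  - subst. destruct (Req_dec b 0) as [Eb|Eb]. subst; nra.
    specialize (H (-(a+1)/(2*b))).
    replace (a + 2 * b * (- (a + 1) / (2 * b)) + 0 * (- (a + 1) / (2 * b)) ^ 2) with (-1) in H
      by (field; auto). lra.
  - specialize (H (-b/c)).
    assert (a*c - b^2 = c * (a + 2*b*(-b/c) + c*(-b/c)^2)) by (field; lra).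
    assert (0 < c) by lra. nra.
Qed.

Lemma CS_gen (F : vec -> vec -> R) :
  (forall u v, F u v = F v u) ->
  (forall a u b v w, F (lin a u b v) w = a * F u w + b * F v w) ->
  (forall w, 0 <= F w w) -> forall u v, (F u v)^2 <= F u u * F v v.
Proof.
  intros Hs Hl Hp u v. apply disc. apply Hp.
  intro t. specialize (Hp (lin 1 u t v)).
  rewrite Hl, (Hs u), (Hs v), !Hl in Hp. rewrite (Hs v u) in Hp. nra.
Qed.

Definition sp d (u v : vec) := fold_right Rplus 0 (map (fun i => u i * v i) (seq 1 d)).

Lemma sp_cs d u v : (sp d u v)^2 <= sp d u u * sp d v v.
Proof.
  apply (CS_gen (sp d)).
  - intros; unfold sp; apply fr_sym.
  - intros; unfold sp; rewrite fr_lin; reflexivity.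
  - intros; apply fr_pos.
Qed.

Lemma mk_sp d u v : minkowski d u v = - u 0%nat * v 0%nat + sp d u v.
Proof. reflexivity. Qed.

Lemma Qp_psd d p w : Hyp d p -> 0 <= minkowski d w w + (minkowski d w p)^2.
Proof.
  intros [Hpp [Hp0 _]]. rewrite !mk_sp in *.
  pose proof (sp_cs d w p) as Hcs.
  pose proof (fr_pos (seq 1 d) w) as HW. pose proof (fr_pos (seq 1 d) p) as HP.
  fold (sp d w w) in HW. fold (sp d p p) in HP.
  set (W := sp d w w) in *. set (S := sp d w p) in *. set (P := sp d p p) in *.
  destruct (Req_dec P 0) as [E|E].
  - rewrite E in *. assert (S = 0) by nra. subst S. rewrite H. nra.
  - assert (0 < P) by lra.
    assert (P * (- w 0%nat * w 0%nat + W + (- w 0%nat * p 0%nat + S) ^ 2) =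
            (P*W - S^2) + (S * p 0%nat - w 0%nat * P)^2).
    { assert (HP' : P = p 0%nat * p 0%nat - 1) by lra. rewrite HP'. ring. }
    set (X := - w 0%nat * w 0%nat + W + (- w 0%nat * p 0%nat + S) ^ 2) in *.
    assert (0 <= P * X).
    { rewrite H0. pose proof (pow2_ge_0 (S * p 0%nat - w 0%nat * P)). nra. }
    apply (Rmult_le_reg_l P); lra.
Qed.

Definition Qp d p (u v : vec) := minkowski d u v + minkowski d u p * minkowski d v p.

Lemma Qp_cs d p u v : Hyp d p -> (Qp d p u v)^2 <= Qp d p u u * Qp d p v v.
Proof.
  intro Hp. apply (CS_gen (Qp d p)).
  - intros; unfold Qp; rewrite (mk_sym d u0); ring.
  - intros; unfold Qp; rewrite !mk_lin; ring.
  - intros; unfold Qp. pose proof (Qp_psd d p w Hp). nra.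
Qed.

Lemma hyp_pp d p : Hyp d p -> minkowski d p p = -1.
Proof. intros [H _]; exact H. Qed.

Lemma rev_cs d u v : Hyp d u -> Hyp d v -> 1 <= - minkowski d u v.
Proof.
  intros Hu Hv. pose proof (Qp_psd d u v Hu) as H1. rewrite (hyp_pp d v Hv), (mk_sym d v u) in H1.
  assert (minkowski d u v < 0).
  { destruct Hu as [Hu1 [Hu0 _]]. destruct Hv as [Hv1 [Hv0 _]].
    rewrite mk_sp in *. pose proof (sp_cs d u v).
    pose proof (fr_pos (seq 1 d) u). pose proof (fr_pos (seq 1 d) v).
    fold (sp d u u) in *. fold (sp d v v) in *.
    assert (sp d u u = u 0%nat * u 0%nat - 1) by lra.
    assert (sp d v v = v 0%nat * v 0%nat - 1) by lra.
    assert ((sp d u v)^2 < (u 0%nat * v 0%nat)^2) by nra.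
    assert (0 < u 0%nat * v 0%nat) by nra.
    nra. }
  nra.
Qed.

Lemma tri_bound d p u z : Hyp d p -> Hyp d u -> Hyp d z ->
  - minkowski d u z <= 2 * (- minkowski d u p) * (- minkowski d z p).
Proof.
  intros Hp Hu Hz. pose proof (Qp_cs d p u z Hp) as H. unfold Qp in H.
  rewrite (hyp_pp d u Hu), (hyp_pp d z Hz) in H.
  pose proof (rev_cs d u p Hu Hp). pose proof (rev_cs d z p Hz Hp).
  set (a := minkowski d u p) in *. set (b := minkowski d z p) in *.
  assert ((minkowski d u z + a*b)^2 <= (a*b)^2) by nra.
  assert (0 < a*b) by nra.
  nra.
Qed.

Definition Q2 d p n (u v : vec) :=
  minkowski d u v + minkowski d u p * minkowski d v p - minkowski d u n * minkowski d v n.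

Lemma Q2_cs d p n u v : Hyp d p -> minkowski d n n = 1 -> minkowski d n p = 0 ->
  (Q2 d p n u v)^2 <= Q2 d p n u u * Q2 d p n v v.
Proof.
  intros Hp Hn Hnp. apply (CS_gen (Q2 d p n)).
  - intros; unfold Q2; rewrite (mk_sym d u0); ring.
  - intros; unfold Q2; rewrite !mk_lin; ring.
  - intros w. pose proof (Qp_psd d p (lin 1 w (- minkowski d w n) n) Hp) as H.
    rewrite !mk_lin, !mk_lin_r in H. rewrite (mk_sym d n w), Hn, Hnp in H.
    unfold Q2. nra.
Qed.

Lemma real_step c c' G G' q : 1 <= c -> 1 <= c' -> 1 <= q ->
  0 <= c^2 - G^2 - 1 -> 0 <= c'^2 - G'^2 - 1 ->
  (c*c' - G*G' - q)^2 <= (c^2 - G^2 - 1) * (c'^2 - G'^2 - 1) ->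
  Rabs (c*G' - G*c') <= q * (c + c').
Proof.
  intros Hc Hc' Hq Hk Hk' H.
  assert (HX : 0 <= c*c' - G*G').
  { assert (G^2 <= c^2) by lra. assert (G'^2 <= c'^2) by lra.
    assert ((G*G')^2 <= (c*c')^2) by (rewrite !Rpow_mult_distr; apply Rmult_le_compat; nra).
    assert (0 < c*c') by nra. nra. }
  assert (Hkk : 1 <= c^2 - G^2) by lra. assert (Hkk' : 1 <= c'^2 - G'^2) by lra.
  assert (Hkc : c^2 - G^2 <= c^2) by nra. assert (Hkc' : c'^2 - G'^2 <= c'^2) by nra.
  set (k := c^2 - G^2) in *. set (k' := c'^2 - G'^2) in *.
  set (X := c*c' - G*G') in *.
  assert (Hid : (c*G' - G*c')^2 = X^2 - k*k') by (unfold X, k, k'; ring).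
  set (m := sqrt (k*k')).
  assert (Hm2 : m*m = k*k') by (apply sqrt_sqrt; nra).
  assert (Hm0 : 0 <= m) by apply sqrt_pos.
  assert (Hm1 : 1 <= m) by nra.
  assert (Hmc : m <= c*c').
  { assert (k*k' <= (c*c')^2) by (rewrite Rpow_mult_distr; apply Rmult_le_compat; nra).
    assert (0 < c*c') by nra. destruct (Rle_dec m (c*c')); auto.
    assert ((c*c')*(c*c') < m*m) by (apply Rmult_le_0_lt_compat; nra). nra. }
  assert (Hmain : (c*G' - G*c')^2 <= 3 * q^2 * (c*c')).
  { rewrite Hid. destruct (Rle_dec X q).
    - assert (X^2 <= q^2) by nra. assert (q^2 <= 3*q^2*(c*c')) by nra. nra.
    - assert ((X-q)^2 <= m*m) by nra.
      assert (X - q <= m).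
      { destruct (Rle_dec (X-q) m); auto.
        assert (m*m < (X-q)*(X-q)) by (apply Rmult_le_0_lt_compat; lra). nra. }
      assert (X*X <= (q+m)*(q+m)) by (apply Rmult_le_compat; lra).
      assert (X^2 - k*k' <= q^2 + 2*q*m) by nra.
      assert (q^2 * 1 <= q^2 * m) by (apply Rmult_le_compat_l; nra).
      assert (1 * (q*m) <= q * (q*m)) by (apply Rmult_le_compat_r; nra).
      assert (q^2 + 2*q*m <= 3*q^2*m) by nra.
      nra. }
  assert (Hsq : (c*G' - G*c')^2 <= (q*(c+c'))^2) by nra.
  assert (0 <= q*(c+c')) by nra.
  destruct (Rcase_abs (c*G' - G*c')); [rewrite Rabs_left by lra | rewrite Rabs_right by lra]; nra.
Qed.

Lemma step d p n z z' : Hyp d p -> Hyp d z -> Hyp d z' ->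
  minkowski d n n = 1 -> minkowski d n p = 0 ->
  Rabs ((- minkowski d z p) * minkowski d z' n - minkowski d z n * (- minkowski d z' p))
  <= (- minkowski d z z') * ((- minkowski d z p) + (- minkowski d z' p)).
Proof.
  intros Hp Hz Hz' Hn Hnp.
  pose proof (Q2_cs d p n z z' Hp Hn Hnp) as H. unfold Q2 in H.
  pose proof (Q2_cs d p n z z Hp Hn Hnp) as H1. unfold Q2 in H1.
  pose proof (Q2_cs d p n z' z' Hp Hn Hnp) as H2. unfold Q2 in H2.
  rewrite (hyp_pp d z Hz) in *. rewrite (hyp_pp d z' Hz') in *.
  apply real_step.
  - apply rev_cs; auto.
  - apply rev_cs; auto.
  - apply rev_cs; auto.
  -
    pose proof (Qp_psd d p (lin 1 z (- minkowski d z n) n) Hp) as H3.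
    rewrite !mk_lin, !mk_lin_r in H3. rewrite (mk_sym d n z), Hn, Hnp, (hyp_pp d z Hz) in H3. nra.
  - pose proof (Qp_psd d p (lin 1 z' (- minkowski d z' n) n) Hp) as H3.
    rewrite !mk_lin, !mk_lin_r in H3. rewrite (mk_sym d n z'), Hn, Hnp, (hyp_pp d z' Hz') in H3. nra.
  - nra.
Qed.

Lemma hd_exp d u v : Hyp d u -> Hyp d v ->
  exp (hdist d u v) = - minkowski d u v + sqrt (- minkowski d u v * - minkowski d u v - 1).
Proof.
  intros Hu Hv. pose proof (rev_cs d u v Hu Hv).
  unfold hdist, arcosh. rewrite exp_ln; auto.
  pose proof (sqrt_pos (- minkowski d u v * - minkowski d u v - 1)). lra.
Qed.

Lemma sq_facts w : 1 <= w -> sqrt (w*w-1) * sqrt (w*w-1) = w*w-1 /\ 0 <= sqrt (w*w-1) /\ sqrt (w*w-1) <= w.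
Proof.
  intros. split; [apply sqrt_sqrt; nra|split; [apply sqrt_pos|]].
  apply Rle_trans with (sqrt (w*w)); [apply sqrt_le_1_alt; lra | rewrite sqrt_square; lra].
Qed.

Lemma hd_sym d u v : hdist d u v = hdist d v u.
Proof. unfold hdist. rewrite mk_sym. reflexivity. Qed.

Lemma exp_le a b : a <= b -> exp a <= exp b.
Proof. intros [H|H]; [left; apply exp_increasing; auto| subst; lra]. Qed.

Lemma hd_nonneg d u v : Hyp d u -> Hyp d v -> 0 <= hdist d u v.
Proof.
  intros Hu Hv. pose proof (hd_exp d u v Hu Hv). pose proof (rev_cs d u v Hu Hv).
  destruct (sq_facts _ H0) as [_ [H1 _]].
  destruct (Rle_dec 0 (hdist d u v)); auto.
  assert (exp (hdist d u v) < exp 0) by (apply exp_increasing; lra). rewrite exp_0 in H2. lra.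
Qed.

Lemma hd_le d u v r : Hyp d u -> Hyp d v -> hdist d u v <= r -> - minkowski d u v <= exp r.
Proof.
  intros Hu Hv H. pose proof (hd_exp d u v Hu Hv). pose proof (rev_cs d u v Hu Hv).
  destruct (sq_facts _ H1) as [_ [H2 _]]. pose proof (exp_le _ _ H). lra.
Qed.

Lemma hd_gt d u v s : Hyp d u -> Hyp d v -> s < hdist d u v -> exp s < 2 * - minkowski d u v.
Proof.
  intros Hu Hv H. pose proof (hd_exp d u v Hu Hv). pose proof (rev_cs d u v Hu Hv).
  destruct (sq_facts _ H1) as [_ [_ H2]]. pose proof (exp_increasing _ _ H). lra.
Qed.

Lemma hd_upper d u v t : Hyp d u -> Hyp d v -> 2 * - minkowski d u v <= exp t -> hdist d u v <= t.
Proof.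
  intros Hu Hv H. pose proof (hd_exp d u v Hu Hv). pose proof (rev_cs d u v Hu Hv).
  destruct (sq_facts _ H1) as [_ [_ H2]].
  destruct (Rle_dec (hdist d u v) t); auto.
  assert (exp t < exp (hdist d u v)) by (apply exp_increasing; lra). lra.
Qed.

Lemma hd_one d u v : - minkowski d u v = 1 -> hdist d u v = 0.
Proof.
  intros H. unfold hdist, arcosh. rewrite H.
  replace (1*1-1) with 0 by ring. rewrite sqrt_0, Rplus_0_r. apply ln_1.
Qed.

Lemma cosh_add d x y p : Hyp d x -> Hyp d y -> Hyp d p ->
  hdist d x p + hdist d p y = hdist d x y ->
  - minkowski d x y = (- minkowski d x p) * (- minkowski d p y)
     + sqrt ((- minkowski d x p) * (- minkowski d x p) - 1) * sqrt ((- minkowski d p y) * (- minkowski d p y) - 1).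
Proof.
  intros Hx Hy Hp H.
  assert (E : exp (hdist d x y) = exp (hdist d x p) * exp (hdist d p y)) by (rewrite <- H; apply exp_plus).
  rewrite !hd_exp in E by auto.
  pose proof (rev_cs d x y Hx Hy). pose proof (rev_cs d x p Hx Hp). pose proof (rev_cs d p y Hp Hy).
  set (C := - minkowski d x y) in *. set (A := - minkowski d x p) in *. set (B := - minkowski d p y) in *.
  destruct (sq_facts C) as [HC1 [HC2 HC3]]; auto.
  destruct (sq_facts A) as [HA1 [HA2 HA3]]; auto.
  destruct (sq_facts B) as [HB1 [HB2 HB3]]; auto.
  set (sC := sqrt (C*C-1)) in *. set (sA := sqrt (A*A-1)) in *. set (sB := sqrt (B*B-1)) in *.
  assert (F : C - sC = (A - sA) * (B - sB)).
  { transitivity ((C - sC) * ((A+sA)*(A-sA)) * ((B+sB)*(B-sB))).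
    - replace ((A+sA)*(A-sA)) with 1 by nra. replace ((B+sB)*(B-sB)) with 1 by nra. ring.
    - transitivity ((C - sC) * (C + sC) * (A-sA) * (B-sB)).
      + rewrite E. ring.
      + replace ((C - sC) * (C + sC)) with 1 by nra. ring. }
  nra.
Qed.


Lemma erase (P : vec -> Prop) (Hop : vec -> vec -> Prop) : forall m (f : nat -> vec),
  (forall i, (i <= m)%nat -> P (f i)) ->
  (forall i, (i < m)%nat -> Hop (f i) (f (S i))) ->
  exists m' (g : nat -> vec), g 0%nat = f 0%nat /\ g m' = f m /\
    (forall i, (i <= m')%nat -> P (g i)) /\
    (forall i, (i < m')%nat -> Hop (g i) (g (S i))) /\
    (forall i j, (i <= m')%nat -> (j <= m')%nat -> g i = g j -> i = j).
Proof.
  intro m. induction m as [m IH] using (well_founded_induction lt_wf).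
  intros f HP HH.
  destruct (classic (exists i j, (i < j <= m)%nat /\ f i = f j)) as [[i [j [Hij E]]]|N].
  - set (f' := fun k => if (k <=? i)%nat then f k else f (k + (j - i))%nat).
    destruct (IH (m - (j - i))%nat ltac:(lia) f') as [m' [g [H1 [H2 [H3 [H4 H5]]]]]].
    + intros k Hk. unfold f'. destruct (Nat.leb_spec k i); apply HP; lia.
    + intros k Hk. unfold f'.
      destruct (Nat.leb_spec k i); destruct (Nat.leb_spec (S k) i).
      * apply HH; lia.
      * assert (k = i) by lia. subst k. rewrite E.
        replace (S i + (j - i))%nat with (S j) by lia. apply HH; lia.
      * lia.
      * replace (S k + (j - i))%nat with (S (k + (j - i))) by lia. apply HH; lia.
    + exists m', g. split; [|split; [|split; [auto|split; auto]]].
      * rewrite H1. reflexivity.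
      * rewrite H2. unfold f'. destruct (Nat.leb_spec (m - (j - i)) i).
        -- assert (j = m) by lia. subst j. assert (m - (m - i) = i)%nat by lia. rewrite H0. auto.
        -- f_equal. lia.
  - exists m, f. repeat split; auto.
    intros i j Hi Hj E. destruct (Nat.lt_total i j) as [L|[L|L]]; auto.
    + exfalso. apply N. exists i, j. split; [lia|auto].
    + exfalso. apply N. exists j, i. split; [lia|auto].
Qed.

Definition wsum (w : vec -> R) (F : list vec) := fold_right (fun z acc => w z + acc) 0 F.

Lemma wsum_app w l1 l2 : wsum w (l1 ++ l2) = wsum w l1 + wsum w l2.
Proof. induction l1; simpl; [ring | rewrite IHl1; ring]. Qed.

Lemma wsum_filter w (b : vec -> bool) F :
  wsum w F = wsum w (filter b F) + wsum w (filter (fun z => negb (b z)) F).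
Proof. induction F; simpl; [ring|]. destruct (b a); simpl; rewrite IHF; ring. Qed.

Lemma wsum_le_len w F M : (forall z, In z F -> w z <= M) -> wsum w F <= INR (length F) * M.
Proof.
  induction F; intros H; [simpl; lra|]. unfold wsum; cbn [fold_right length]; fold (wsum w F). rewrite S_INR.
  assert (w a <= M) by (apply H; left; auto).
  assert (wsum w F <= INR (length F) * M) by (apply IHF; intros; apply H; right; auto). lra.
Qed.

Lemma wsum_map_seq (w : vec -> R) (g : nat -> vec) l :
  fold_right Rplus 0 (map (fun i => w (g i)) l) = wsum w (map g l).
Proof. induction l; simpl; [auto | rewrite IHl; auto]. Qed.

Lemma fr_seqS (w : nat -> R) n :
  fold_right Rplus 0 (map w (seq 0 (S n))) = fold_right Rplus 0 (map w (seq 0 n)) + w n.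
Proof.
  rewrite seq_S, map_app, fold_right_app. simpl.
  generalize (map w (seq 0 n)). intro l. induction l; simpl; [ring| rewrite IHl; ring].
Qed.

Lemma telesc (th w : nat -> R) Q0 m :
  (forall i, (i < m)%nat -> Rabs (th (S i) - th i) <= Q0 * (w i + w (S i))) ->
  (forall i, (i <= m)%nat -> 0 <= w i) -> 0 <= Q0 ->
  th m - th 0%nat <= 2 * Q0 * fold_right Rplus 0 (map w (seq 0 (S m))).
Proof.
  intros H Hw HQ.
  assert (forall k, (k <= m)%nat -> th k - th 0%nat <= Q0 * (2 * fold_right Rplus 0 (map w (seq 0 (S k))) - w k)).
  { induction k; intros Hk.
    - simpl. pose proof (Hw 0%nat ltac:(lia)). nra.
    - rewrite fr_seqS.
      assert (IH := IHk ltac:(lia)).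
      specialize (H k ltac:(lia)). pose proof (Rle_abs (th (S k) - th k)). nra. }
  specialize (H0 m (le_n m)). pose proof (Hw m (le_n m)). nra.
Qed.

Definition growth_bd d (U : vec -> Prop) T := forall t, T < t -> forall u, U u ->
  forall l : list vec, NoDup l -> (forall z, In z l -> U z /\ hdist d u z <= t) ->
  INR (length l) <= exp (t/16).

Lemma e1_gt2 : 2 < exp 1.
Proof. pose proof (exp_ineq1 1 ltac:(lra)). lra. Qed.

Lemma ehalf : exp (-(1/2)) <= 2/3.
Proof.
  pose proof (exp_ineq1 (1/2) ltac:(lra)). rewrite exp_Ropp.
  replace (2/3) with (/ (3/2)) by field. apply Rinv_le_contravar; lra.
Qed.

Lemma equarter : exp (1/4) <= 3.
Proof. pose proof exp_le_3. pose proof (exp_le (1/4) 1 ltac:(lra)). lra. Qed.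

Lemma one_level d U p T J : (forall x, U x -> Hyp d x) -> Hyp d p -> growth_bd d U T ->
  0 <= J -> T < 2*J+4 -> forall F, NoDup F ->
  (forall z, In z F -> U z /\ exp J <= - minkowski d z p < exp (J+1)) ->
  wsum (fun z => / (- minkowski d z p)) F <= 9 * (exp (-J/2) - exp (-(J+1)/2)).
Proof.
  intros HU Hp Hg HJ HT F HF Hz.
  assert (Hlen : INR (length F) <= exp ((2*J+4)/16)).
  { destruct F as [|u F']. { simpl. pose proof (exp_pos ((2*J+4)/16)). lra. }
    apply (Hg (2*J+4) HT u). { apply Hz; left; auto. } auto.
    intros z Hzin. destruct (Hz z Hzin) as [Uz [Hz1 Hz2]]. split; auto.
    destruct (Hz u (or_introl eq_refl)) as [Uu [Hu1 Hu2]].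
    apply hd_upper; auto.
    pose proof (tri_bound d p u z Hp (HU u Uu) (HU z Uz)).
    pose proof (exp_pos J).
    assert (exp (2*J+4) = (exp 1 * exp 1) * exp (J+1) * exp (J+1)) by (rewrite <- !exp_plus; f_equal; ring).
    pose proof e1_gt2.
    assert ((- minkowski d u p) * (- minkowski d z p) <= exp (J+1) * exp (J+1)) by (apply Rmult_le_compat; lra).
    assert (4 * (exp (J+1) * exp (J+1)) <= (exp 1 * exp 1) * exp (J+1) * exp (J+1)).
    { pose proof (exp_pos (J+1)). assert (4 <= exp 1 * exp 1) by nra. nra. }
    lra. }
  assert (Hw : wsum (fun z => / (- minkowski d z p)) F <= INR (length F) * exp (-J)).
  { apply wsum_le_len. intros z Hzin. destruct (Hz z Hzin) as [_ [H1 H2]].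
    rewrite exp_Ropp. apply Rinv_le_contravar; auto. apply exp_pos. }
  assert (E1 : exp ((2*J+4)/16) * exp (-J) = exp (1/4) * exp (-J/2) * exp (-(3*J/8)))
    by (rewrite <- !exp_plus; f_equal; field).
  assert (E2 : exp (-(J+1)/2) = exp (-J/2) * exp (-(1/2))) by (rewrite <- exp_plus; f_equal; field).
  assert (E3 : exp (-(3*J/8)) <= 1) by (rewrite <- exp_0; apply exp_le; lra).
  pose proof ehalf. pose proof equarter. pose proof (exp_pos (-J/2)).
  pose proof (exp_pos (-(3*J/8))). pose proof (exp_pos (1/4)). pose proof (exp_pos (-J)).
  assert (INR (length F) * exp (-J) <= exp ((2*J+4)/16) * exp (-J)) by (apply Rmult_le_compat_r; lra).
  rewrite E2. rewrite E1 in H5.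
  assert (exp (1/4) * exp (-J/2) * exp (-(3*J/8)) <= 3 * exp (-J/2) * 1).
  { apply Rmult_le_compat; try nra; try (apply Rmult_le_compat_r; lra). }
  nra.
Qed.

Lemma levels d U p T : (forall x, U x -> Hyp d x) -> Hyp d p -> growth_bd d U T ->
  forall n J, 0 <= J -> T < 2*J+4 -> forall F, NoDup F ->
  (forall z, In z F -> U z /\ exp J <= - minkowski d z p < exp (J + INR n)) ->
  wsum (fun z => / (- minkowski d z p)) F <= 9 * (exp (-J/2) - exp (-(J + INR n)/2)).
Proof.
  intros HU Hp Hg n. induction n; intros J HJ HT F HF Hz.
  - destruct F as [|z F'].
    + change (INR 0) with 0. rewrite Rplus_0_r. simpl. lra.
    + exfalso. destruct (Hz z (or_introl eq_refl)) as [_ [H1 H2]]. simpl in H2. rewrite Rplus_0_r in H2. lra.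
  - set (b := fun z => if Rlt_dec (- minkowski d z p) (exp (J+1)) then true else false).
    rewrite (wsum_filter _ b F).
    assert (H1 : wsum (fun z => / (- minkowski d z p)) (filter b F) <= 9 * (exp (-J/2) - exp (-(J+1)/2))).
    { apply (one_level d U p T J); auto. apply NoDup_filter; auto.
      intros z Hzin. apply filter_In in Hzin. destruct Hzin as [Hzin Hb].
      destruct (Hz z Hzin) as [Uz [A1 A2]]. unfold b in Hb.
      destruct (Rlt_dec (- minkowski d z p) (exp (J + 1))); [|discriminate]. auto. }
    assert (H2 : wsum (fun z => / (- minkowski d z p)) (filter (fun z => negb (b z)) F)
                 <= 9 * (exp (-(J+1)/2) - exp (-((J+1) + INR n)/2))).
    { apply IHn; try lra. apply NoDup_filter; auto.
      intros z Hzin. apply filter_In in Hzin. destruct Hzin as [Hzin Hb].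
      destruct (Hz z Hzin) as [Uz [A1 A2]]. unfold b in Hb.
      destruct (Rlt_dec (- minkowski d z p) (exp (J + 1))); [discriminate|].
      rewrite S_INR in A2. split; auto. split; [lra|]. replace (J + 1 + INR n) with (J + (INR n + 1)) by ring. auto. }
    rewrite S_INR. replace (-(J + (INR n + 1))/2) with (-((J+1) + INR n)/2) by field. lra.
Qed.

Lemma growth_of d U : subexp_growth d U -> exists T, growth_bd d U T.
Proof.
  intros [Hfin Hlim]. apply is_lim_spec in Hlim.
  assert (P16 : 0 < 1/16) by lra.
  destruct (Hlim (mkposreal _ P16)) as [M HM]. simpl in HM.
  exists (Rmax M 1). intros t Ht u Uu l Hl Hz.
  assert (HtM : M < t) by (pose proof (Rmax_l M 1); lra).
  assert (Ht1 : 1 < t) by (pose proof (Rmax_r M 1); lra).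
  specialize (HM t HtM). rewrite Rminus_0_r in HM.
  set (N := real (ball_count_sup d U t)) in *.
  assert (HlN : INR (length l) <= N).
  { destruct (Lub_Rbar_correct (fun k : R => exists u, U u /\
     exists l : list vec, NoDup l /\
       (forall z, In z l -> U z /\ hdist d u z <= t) /\
       k = INR (length l))) as [Hub _].
    specialize (Hub (INR (length l))).
    assert (Rbar_le (INR (length l)) (ball_count_sup d U t)).
    { apply Hub. exists u. split; auto. exists l. auto. }
    unfold N. rewrite <- (Hfin t) in H. simpl in H. auto. }
  destruct l as [|z l'].
  - simpl. pose proof (exp_pos (t/16)). lra.
  - assert (1 <= INR (length (z :: l'))) by (simpl length; rewrite S_INR; pose proof (pos_INR (length l')); lra).
    assert (HN : 0 < N) by lra.
    assert (ln N < t/16).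
    { assert (0 < / t) by (apply Rinv_0_lt_compat; lra).
      assert (0 < ln N \/ ln N <= 0) by lra. destruct H1; [|lra].
      rewrite Rabs_right in HM by (apply Rle_ge; apply Rmult_le_pos; lra).
      assert (ln N = t * (/ t * ln N)) by (field; lra). rewrite H2. nra. }
    rewrite <- (exp_ln N) in HlN by auto.
    pose proof (exp_increasing _ _ H0). lra.
Qed.

Lemma div_step c c' G G' q Q : 0 < c -> 0 < c' -> q <= Q ->
  Rabs (c*G' - G*c') <= q*(c+c') -> Rabs (G'/c' - G/c) <= Q * (/c + /c').
Proof.
  intros Hc Hc' HQ H.
  assert (E : G'/c' - G/c = (c*G' - G*c') * / (c*c')) by (field; lra).
  rewrite E, Rabs_mult, (Rabs_right (/ (c*c'))) by (apply Rle_ge, Rlt_le, Rinv_0_lt_compat; nra).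
  assert (0 < / (c*c')) by (apply Rinv_0_lt_compat; nra).
  apply Rle_trans with (q*(c+c') * / (c*c')). apply Rmult_le_compat_r; lra.
  assert (q*(c+c') * / (c*c') = q * (/c + /c')) by (field; lra). rewrite H1.
  assert (0 < /c) by (apply Rinv_0_lt_compat; lra). assert (0 < /c') by (apply Rinv_0_lt_compat; lra).
  apply Rmult_le_compat_r; lra.
Qed.

Lemma list_bound (h : vec -> R) F : exists M, forall z, In z F -> h z <= M.
Proof.
  induction F as [|a F [M HM]]. exists 0; intros z [].
  exists (Rmax (h a) M). intros z [E|Hz]. subst; apply Rmax_l.
  apply Rle_trans with M; auto. apply Rmax_r.
Qed.

Lemma exp_ge x : 1 + x <= exp x.
Proof.
  destruct (Req_dec x 0). subst. rewrite exp_0. lra. left. apply exp_ineq1; auto.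
Qed.

Theorem lemma5p1 (d : nat) (U : vec -> Prop) (r : R) :
  (forall x, U x -> Hyp d x) ->
  uniformly_discrete d U ->
  r_connected d r U ->
  subexp_growth d U ->
  exists s : R,
    forall (x y : vec) (m : nat) (f : nat -> vec),
      r_chain d r U x y m f ->
      forall p, on_geodesic d x y p ->
      exists i, (i <= m)%nat /\ hdist d (f i) p <= s.
Proof.
  intros HU _ _ Hsub.
  destruct (growth_of d U Hsub) as [T HT].
  set (J := Rmax 1 (Rmax T (2 * (ln 18 + r))) + 1).
  assert (HJ1 : 1 < J) by (unfold J; pose proof (Rmax_l 1 (Rmax T (2 * (ln 18 + r)))); lra).
  assert (HJT : T < J) by (unfold J; pose proof (Rmax_r 1 (Rmax T (2 * (ln 18 + r)))); pose proof (Rmax_l T (2 * (ln 18 + r))); lra).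
  assert (HJr : ln 18 + r < J/2) by (unfold J; pose proof (Rmax_r 1 (Rmax T (2 * (ln 18 + r)))); pose proof (Rmax_r T (2 * (ln 18 + r))); lra).
  exists (J + 1).
  intros x y m f [Hf0 [Hfm [HfU Hfr]]] p [gamma [HG1 [HG2 [Hg0 [HgD [t0 [Ht0 Hgt0]]]]]]].
  destruct (classic (exists i, (i <= m)%nat /\ hdist d (f i) p <= J + 1)) as [Hex|Hno]; auto.
  exfalso.
  assert (Hfar : forall i, (i <= m)%nat -> J + 1 < hdist d (f i) p).
  { intros i Hi. destruct (Rlt_dec (J+1) (hdist d (f i) p)); auto. exfalso. apply Hno. exists i. split; auto. lra. }
  set (D := hdist d x y) in *.
  assert (Hp : Hyp d p) by (rewrite <- Hgt0; apply HG1; auto).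
  assert (Hx : Hyp d x) by (rewrite <- Hf0; apply HU, HfU; lia).
  assert (Hy : Hyp d y) by (rewrite <- Hfm; apply HU, HfU; lia).
  assert (Ha : hdist d x p = t0).
  { rewrite <- Hg0, <- Hgt0. rewrite HG2 by lra. rewrite Rabs_left1 by lra. ring. }
  assert (Hb : hdist d p y = D - t0).
  { rewrite <- HgD. rewrite <- Hgt0. rewrite HG2 by lra. rewrite Rabs_left1 by lra. ring. }
  assert (Hadd : hdist d x p + hdist d p y = hdist d x y) by (fold D; lra).
  pose proof (cosh_add d x y p Hx Hy Hp Hadd) as HC.
  set (A := - minkowski d x p) in *. set (Bb := - minkowski d p y) in *.
  set (C := - minkowski d x y) in *.
  assert (HA1 : 1 <= A) by (apply rev_cs; auto).
  assert (HB1 : 1 <= Bb) by (apply rev_cs; auto).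
  assert (HeJ : exp J * 2 <= exp (J+1)).
  { rewrite exp_plus. pose proof e1_gt2. pose proof (exp_pos J). nra. }
  assert (HeJ1 : 2 < exp J) by (pose proof e1_gt2; pose proof (exp_le 1 J ltac:(lra)); lra).
  assert (HA2 : 2 <= A).
  { assert (J + 1 < hdist d x p) by (rewrite <- Hf0; apply Hfar; lia).
    pose proof (hd_gt d x p (J+1) Hx Hp H). fold A in H0. lra. }
  assert (HB2 : 2 <= Bb).
  { assert (J + 1 < hdist d p y) by (rewrite hd_sym, <- Hfm; apply Hfar; lia).
    pose proof (hd_gt d p y (J+1) Hp Hy H). fold Bb in H0. lra. }
  destruct (sq_facts A HA1) as [sA1 [sA2 _]]. destruct (sq_facts Bb HB1) as [sB1 [sB2 _]].
  set (sA := sqrt (A*A-1)) in *. set (sB := sqrt (Bb*Bb-1)) in *.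
  assert (sAh : A <= 2 * sA) by nra. assert (sBh : Bb <= 2 * sB) by nra.
  set (sg := sA + sB).
  assert (Hsg : 0 < sg) by (unfold sg; lra).
  assert (Exx : minkowski d x x = -1) by (apply hyp_pp; auto).
  assert (Eyy : minkowski d y y = -1) by (apply hyp_pp; auto).
  assert (Epp : minkowski d p p = -1) by (apply hyp_pp; auto).
  assert (Exp : minkowski d x p = - A) by (unfold A; ring).
  assert (Epx : minkowski d p x = - A) by (rewrite mk_sym; unfold A; ring).
  assert (Epy : minkowski d p y = - Bb) by (unfold Bb; ring).
  assert (Eyp : minkowski d y p = - Bb) by (rewrite mk_sym; unfold Bb; ring).
  assert (Exy : minkowski d x y = - C) by (unfold C; ring).
  assert (Eyx : minkowski d y x = - C) by (rewrite mk_sym; unfold C; ring).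
  set (n := lin (/ sg) (lin 1 (lin 1 y (-1) x) (A - Bb) p) 0 (lin 1 (lin 1 y (-1) x) (A - Bb) p)).
  assert (Enp : minkowski d n p = 0).
  { unfold n. rewrite !mk_lin. rewrite Eyp, Exp, Epp. ring. }
  assert (Epn : minkowski d p n = 0) by (rewrite mk_sym; auto).
  assert (Exn : minkowski d x n = - sA).
  { unfold n. rewrite !mk_lin_r. rewrite Exy, Exx, Exp. rewrite HC.
    apply (Rmult_eq_reg_l sg); [|lra]. field_simplify; [|lra]. unfold sg. nra. }
  assert (Eyn : minkowski d y n = sB).
  { unfold n. rewrite !mk_lin_r. rewrite Eyy, Eyx, Eyp. rewrite HC.
    apply (Rmult_eq_reg_l sg); [|lra]. field_simplify; [|lra]. unfold sg. nra. }
  assert (Enn : minkowski d n n = 1).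
  { unfold n at 1. rewrite !mk_lin. rewrite Epn, Eyn, Exn. unfold sg in *. field. lra. }
  destruct (erase (fun z => U z /\ J + 1 < hdist d z p) (fun z z' => hdist d z z' <= r) m f)
    as [m' [g [Hg0' [Hgm' [HgP [HgH Hginj]]]]]].
  { intros i Hi. split; auto. }
  { intros i Hi. apply Hfr; auto. }
  rewrite Hf0 in Hg0'. rewrite Hfm in Hgm'.
  set (th := fun i => minkowski d (g i) n / (- minkowski d (g i) p)).
  set (w := fun i => / (- minkowski d (g i) p)).
  assert (Hgc : forall i, (i <= m')%nat -> exp J * 2 < 2 * (- minkowski d (g i) p)).
  { intros i Hi. destruct (HgP i Hi) as [Ui Hi2]. pose proof (hd_gt d (g i) p (J+1) (HU _ Ui) Hp Hi2). lra. }
  assert (Htel : th m' - th 0%nat <= 2 * exp r * fold_right Rplus 0 (map w (seq 0 (S m')))).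
  { apply telesc.
    - intros i Hi. unfold th, w.
      destruct (HgP i ltac:(lia)) as [Ui _]. destruct (HgP (S i) ltac:(lia)) as [Ui' _].
      pose proof (Hgc i ltac:(lia)). pose proof (Hgc (S i) ltac:(lia)).
      apply (div_step _ _ _ _ (- minkowski d (g i) (g (S i)))); try lra.
      + apply hd_le; auto.
      + apply step; auto.
    - intros i Hi. unfold w. pose proof (Hgc i Hi). left. apply Rinv_0_lt_compat. lra.
    - left; apply exp_pos. }
  assert (Hth : 1 <= th m' - th 0%nat).
  { unfold th. rewrite Hgm', Hg0', Eyn, Exn, Eyp. fold A.
    assert (sB / - - Bb = sB / Bb) by (f_equal; ring). rewrite H.
    assert (sB / Bb >= 1/2).
    { apply Rle_ge. apply (Rmult_le_reg_r Bb); [lra|]. field_simplify; lra. }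
    assert (- sA / A <= - (1/2)).
    { apply (Rmult_le_reg_r A); [lra|]. field_simplify; lra. }
    lra. }
  set (F := map g (seq 0 (S m'))).
  assert (HwF : fold_right Rplus 0 (map w (seq 0 (S m'))) = wsum (fun z => / (- minkowski d z p)) F).
  { unfold w, F. apply (wsum_map_seq (fun z => / (- minkowski d z p)) g). }
  assert (HFin : forall z, In z F -> exists i, (i <= m')%nat /\ g i = z).
  { intros z Hz. unfold F in Hz. apply in_map_iff in Hz. destruct Hz as [i [E Hi]].
    apply in_seq in Hi. exists i. split; [lia|auto]. }
  assert (HND : NoDup F).
  { unfold F. apply NoDup_map_NoDup_ForallPairs; [|apply seq_NoDup].
    intros i j Hi Hj E. apply in_seq in Hi. apply in_seq in Hj. apply Hginj; auto; lia. }
  destruct (list_bound (fun z => - minkowski d z p) F) as [M HM].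
  destruct (INR_archimed 1 M ltac:(lra)) as [N HN].
  assert (Hlev : wsum (fun z => / (- minkowski d z p)) F <= 9 * (exp (-J/2) - exp (-(J + INR N)/2))).
  { apply (levels d U p T HU Hp HT N J); try lra; auto.
    intros z Hz. destruct (HFin z Hz) as [i [Hi E]]. subst z.
    destruct (HgP i Hi) as [Ui _]. pose proof (Hgc i Hi). split; auto. split; [lra|].
    pose proof (HM (g i) Hz). pose proof (exp_ge (J + INR N)). lra. }
  pose proof (exp_pos (-(J + INR N)/2)).
  assert (Hfin : 1 <= 2 * exp r * (9 * exp (-J/2))).
  { assert (2 * exp r * fold_right Rplus 0 (map w (seq 0 (S m'))) <= 2 * exp r * (9 * exp (-J/2))).
    { apply Rmult_le_compat_l. pose proof (exp_pos r); lra. rewrite HwF. lra. }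
    lra. }
  assert (E18 : 18 * exp r < exp (J/2)).
  { rewrite <- (exp_ln 18) by lra. rewrite <- exp_plus. apply exp_increasing. lra. }
  assert (Ej : exp (- J / 2) = / exp (J/2)) by (rewrite <- exp_Ropp; f_equal; field).
  rewrite Ej in Hfin.
  pose proof (exp_pos (J/2)). pose proof (exp_pos r).
  assert (Eq9 : 2 * exp r * (9 * / exp (J/2)) = 18 * exp r / exp (J/2)) by (field; lra).
  rewrite Eq9 in Hfin.
  assert (18 * exp r / exp (J/2) < 1).
  { apply (Rmult_lt_reg_r (exp (J/2))); auto. field_simplify; lra. }
  lra.
Qed.
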